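(* For any $n\geq2$ there is a set $\Pi$ of permutations of $[n]=\{1,\dots,n\}$ with $|\Pi|\leq C^n$, where $C>0$ is a universal constant, having the following property. Let $p\in(0,1/2]$, $\delta\in(0,1/2]$, $s\in[-1,0]$, $\nu\in(0,1]$, $L\geq1$, and $x\in\mathrm{Incomp}_n(\delta,\nu)$. Then there is $\sigma\in\Pi$ such that the vector $\widetilde y=(\mathbf Y_{\sigma(i)}(p,x,L,s))_{i=1}^n$ satisfies $$|\widetilde y_i|>\frac{\nu}{\mathcal T_p(x,L)}-1\quad\text{for all } i\leq\delta n,$$ and $$|\widetilde y_i|\leq \frac{2^{(j+1)/2}}{\sqrt\delta\,\mathcal T_p(x,L)}+1\quad\text{for all } i>2^{-j}\delta n,\ \ 0\leq j\leq\log_2(\delta n).$$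
   Context: For $\delta,\nu\in(0,1]$, $\mathrm{Comp}_n(\delta,\nu)$ is the set of unit vectors $x\in\mathbb{R}^n$ for which there exists $y\in\mathbb{R}^n$ with at most $\delta n$ nonzero coordinates and $\|x-y\|_2\leq\nu$, and $\mathrm{Incomp}_n(\delta,\nu)=S^{n-1}\setminus\mathrm{Comp}_n(\delta,\nu)$. The Lévy concentration function is $\mathcal L(\xi,t)=\sup_{\lambda}\mathbb{P}\{|\xi-\lambda|\leq t\}$. For $p\in(0,1/2]$, $x\in S^{n-1}$, $L>0$, the threshold $\mathcal T_p(x,L)$ is the supremum of all $t\in(0,1]$ with $\mathcal L(\sum_i b_ix_i,t)>Lt$, where $b_1,\dots,b_n$ are independent Bernoulli($p$) variables (value $1$ with probability $p$, $0$ otherwise); it is positive. There are universal constants $C',c'>0$ such that for each $p\in(0,1/2]$, $s\in[-1,0]$, $x\in S^{n-1}$, $L\geq1$ one fixes a vector $\mathbf Y(p,x,L,s)\in\mathbb{Z}^n$ satisfying: $\|\frac{\sqrt n}{\mathcal T_p(x,L)}x-\mathbf Y(p,x,L,s)\|_\infty\leq1$; $\mathbb{P}\{|\sum_ib_i\mathbf Y_i(p,x,L,s)+\frac{s\sqrt n}{\mathcal T_p(x,L)}\sum_ix_i|\leq t\}\leq \frac{C'L\mathcal T_p(x,L)}{\sqrt n}t$ for all $t\geq\sqrt n$; $\mathcal L(\sum_ib_i\mathbf Y_i(p,x,L,s),\sqrt n)\geq c'L\mathcal T_p(x,L)$; and $|\frac{\sqrt n}{\mathcal T_p(x,L)}\sum_ix_i-\sum_i\mathbf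 Y_i(p,x,L,s)|\leq C'\sqrt n$ (such vectors exist). *)

(* Defs.v *)
From HB Require Import structures.
From mathcomp Require Import all_boot all_order all_algebra all_fingroup.
From mathcomp Require Import all_classical all_reals.
Set Implicit Arguments. Unset Strict Implicit. Unset Printing Implicit Defensive.
Import Order.TTheory GRing.Theory Num.Theory.
Local Open Scope ring_scope.
Local Open Scope classical_set_scope.

Section Defs.
Variables (R : realType) (n : nat).

(* Probability that a vector b of independent Bernoulli(p) variables
   (b i = true means value 1, with probability p) satisfies P. *)
Definition bern_prob (p : R) (P : {ffun 'I_n -> bool} -> bool) : R :=
  \sum_(b : {ffun 'I_n -> bool} | P b) \prod_(i < n) (if b i then p else 1 - p).

Definition bsum (a : 'I_n -> R) (b : {ffun 'I_n -> bool}) : R :=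
  \sum_(i < n) (b i)%:R * a i.

Definition levy (p : R) (a : 'I_n -> R) (t : R) : R :=
  sup [set bern_prob p (fun b => `|bsum a b - lam| <= t) | lam in [set: R]].

Definition threshold (p : R) (x : 'I_n -> R) (L : R) : R :=
  sup [set t : R | 0 < t <= 1 /\ levy p x t > L * t].

Definition norm2 (x : 'I_n -> R) : R := Num.sqrt (\sum_(i < n) x i ^+ 2).

Definition unit_vec (x : 'I_n -> R) : Prop := norm2 x = 1.

Definition Comp (delta nu : R) (x : 'I_n -> R) : Prop :=
  unit_vec x /\
  exists y : 'I_n -> R,
    (#|[set i : 'I_n | y i != 0]|%:R <= delta * n%:R) /\
    norm2 (fun i => x i - y i) <= nu.

Definition Incomp (delta nu : R) (x : 'I_n -> R) : Prop :=
  unit_vec x /\ ~ Comp delta nu x.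

Definition Y_props (C' c' : R)
  (Y : R -> ('I_n -> R) -> R -> R -> ('I_n -> int)) : Prop :=
  forall (p : R) (x : 'I_n -> R) (L s : R),
    0 < p <= 1/2 -> -1 <= s <= 0 -> unit_vec x -> 1 <= L ->
    let T := threshold p x L in
    let y := fun i => ((Y p x L s i)%:~R : R) in
    [/\ (forall i, `|Num.sqrt n%:R / T * x i - y i| <= 1),
        (forall t, Num.sqrt n%:R <= t ->
           bern_prob p (fun b => `|bsum y b
              + s * Num.sqrt n%:R / T * \sum_(i < n) x i| <= t)
           <= C' * L * T / Num.sqrt n%:R * t),
        c' * L * T <= levy p y (Num.sqrt n%:R) &
        `|Num.sqrt n%:R / T * \sum_(i < n) x i - \sum_(i < n) y i|
          <= C' * Num.sqrt n%:R].

End Defs.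

(* Main.v *)
Require Import Defs.
From HB Require Import structures.
From mathcomp Require Import all_boot all_order all_algebra all_fingroup.
From mathcomp Require Import all_classical all_reals.
From mathcomp Require Import zify lra ring.
Import Order.TTheory GRing.Theory Num.Theory.
Set Implicit Arguments. Unset Strict Implicit. Unset Printing Implicit Defensive.

Lemma sum_lt n q : q <= n -> \sum_(i < n) (i < q : nat) = q.
Proof.
move=> qn; rewrite -(big_mkord xpredT (fun i => (i < q : nat))).
rewrite (big_cat_nat (leq0n q) qn) /=.
rewrite [X in _ + X]big_nat_cond [X in _ + X]big1 ?addn0; last first.
  by move=> i /= /andP[/andP[hq _] _]; rewrite ltnNge hq.
rewrite big_nat_cond (eq_bigr (fun _ => 1)); last first.
  by move=> i /andP[/andP[_ ->] _].
by rewrite -big_nat_cond sum_nat_const_nat subn0 muln1.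
Qed.

Lemma geo_sum N n : \sum_(k < N) n %/ 2 ^ k.+1 <= n.
Proof.
elim: N n => [|N IH] n; first by rewrite big_ord0.
rewrite big_ord_recl /=.
have -> : \sum_(i < N) n %/ 2 ^ (bump 0 i).+1 = \sum_(i < N) (n %/ 2) %/ 2 ^ i.+1.
  by apply: eq_bigr => i _; rewrite /bump /= add1n expnS divnMA.
have := IH (n %/ 2); rewrite expn1.
have := leq_trunc_div n 2. lia.
Qed.

Definition hlev (n i : nat) := trunc_log 2 (n %/ i.+1).

Lemma tl_lt k q : 0 < q -> (k < trunc_log 2 q) = (2 ^ k.+1 <= q).
Proof.
move=> q0; apply/idP/idP => h.
  apply: leq_trans (trunc_logP (isT : 1 < 2) q0).
  by rewrite leq_exp2l.
exact: trunc_log_max.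
Qed.

Lemma tl_le q : trunc_log 2 q <= q.
Proof.
case: q => [|q]; first by rewrite trunc_log0.
apply: leq_trans (trunc_logP (isT : 1 < 2) (ltn0Sn q)).
by apply: ltnW; apply: ltn_expl.
Qed.

Lemma hlev_sum n : \sum_(i < n) hlev n i <= n.
Proof.
have e : forall i : 'I_n, hlev n i = \sum_(k < n) (k < hlev n i : nat).
  move=> i; rewrite sum_lt //; apply: leq_trans (tl_le _) _.
  exact: leq_div.
rewrite (eq_bigr _ (fun i _ => e i)) exchange_big /=.
apply: leq_trans (geo_sum n n).
apply: leq_sum => k _.
have e2 : forall i : 'I_n, (k < hlev n i : nat) = (i < n %/ 2 ^ k.+1 : nat).
  move=> i; rewrite /hlev tl_lt; last by rewrite divn_gt0 // ltn_ord.
  by rewrite leq_divRL // leq_divRL ?expn_gt0 // (mulnC i.+1).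
rewrite (eq_bigr _ (fun i _ => e2 i)) sum_lt //; exact: leq_div.
Qed.

Lemma hlev_eq n i j : i < n -> j < n -> hlev n i = hlev n j -> i.+1 <= 2 * j.+1.
Proof.
move=> hi hj; rewrite /hlev => e.
have qi : 0 < n %/ i.+1 by rewrite divn_gt0.
have qj : 0 < n %/ j.+1 by rewrite divn_gt0.
have h1 := trunc_logP (isT : 1 < 2) qi.
have h2 := trunc_log_ltn (n %/ j.+1) (isT : 1 < 2).
rewrite e in h1; rewrite leq_divRL // in h1.
rewrite ltn_divLR // in h2.
rewrite expnS in h2.
have : 2 ^ trunc_log 2 (n %/ j.+1) * i.+1 < 2 ^ trunc_log 2 (n %/ j.+1) * (2 * j.+1).
  rewrite mulnA (mulnC _ 2). lia.
rewrite ltn_mul2l => /andP[_]; apply: ltnW.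
Qed.

Definition unary (a : nat) : seq bool := nseq a true ++ [:: false].

Lemma unary_cat a b s t : unary a ++ s = unary b ++ t -> a = b /\ s = t.
Proof.
rewrite /unary -!catA /=.
elim: a b => [|a IH] [|b] //=.
- by case=> ->.
- by case=> /IH [-> ->].
Qed.

Lemma flat_inj (l1 l2 : seq nat) t1 t2 : size l1 = size l2 ->
  flatten (map unary l1) ++ t1 = flatten (map unary l2) ++ t2 -> l1 = l2.
Proof.
elim: l1 l2 => [|a l1 IH] [|b l2] //= [hs].
rewrite -[(unary a ++ _) ++ t1]catA -[(unary b ++ _) ++ t2]catA => /unary_cat [-> /IH ->] //.
Qed.

Lemma flat_inj' (T : Type) (s : seq T) (f1 f2 : T -> nat) t1 t2 :
  flatten [seq unary (f1 c) | c <- s] ++ t1 = flatten [seq unary (f2 c) | c <- s] ++ t2 ->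
  map f1 s = map f2 s.
Proof.
elim: s => [|a s IH] //=.
rewrite -[(unary (f1 a) ++ _) ++ t1]catA -[(unary (f2 a) ++ _) ++ t2]catA.
by move=> /unary_cat [-> /IH ->].
Qed.

Lemma nth_pad (s : seq bool) k i : nth false (s ++ nseq k false) i = nth false s i.
Proof.
rewrite nth_cat; case: ltnP => h //.
by rewrite nth_nseq nth_default //; case: ifP.
Qed.

Lemma pad_inj (s1 s2 : seq bool) N : size s1 <= N -> size s2 <= N ->
  (forall i, i < N -> nth false s1 i = nth false s2 i) ->
  s1 ++ nseq (N - size s1) false = s2 ++ nseq (N - size s2) false.
Proof.
move=> h1 h2 h; apply: (@eq_from_nth _ false).
  by rewrite !size_cat !size_nseq !subnKC.
move=> i; rewrite size_cat size_nseq subnKC // => hi.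
by rewrite !nth_pad h.
Qed.

Section Code.
Variable n : nat.
Definition codeT := ({ffun 'I_n -> bool} * {ffun 'I_(n.*2) -> bool})%type.
Definition ucode (g : {perm 'I_n}) := flatten [seq unary (hlev n (g c)) | c <- enum 'I_n].
Definition code (m : nat) (g : {perm 'I_n}) : codeT :=
  ([ffun c => g c < m], [ffun k : 'I_(n.*2) => nth false (ucode g) k]).

Lemma size_ucode g : size (ucode g) <= n.*2.
Proof.
rewrite /ucode size_flatten /shape -map_comp.
have -> : sumn [seq (size \o unary) (hlev n (g c)) | c <- enum 'I_n] =
          \sum_(c < n) (hlev n (g c)).+1.
  rewrite sumnE big_map big_enum /=; apply: eq_bigr => c _; by rewrite size_cat size_nseq addn1.
rewrite (eq_bigr (fun c => hlev n (g c) + 1)); last by move=> c _; rewrite addn1.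
rewrite big_split /= sum1_card card_ord.
have -> : \sum_(c < n) hlev n (g c) = \sum_(c < n) hlev n c.
  by rewrite [RHS](reindex_inj (@perm_inj _ g)).
have := hlev_sum n. rewrite -addnn. lia.
Qed.

Lemma code_inj m g1 g2 : code m g1 = code m g2 ->
  forall c, (g1 c < m) = (g2 c < m) /\ hlev n (g1 c) = hlev n (g2 c).
Proof.
case=> hb hu c; split; first by have := congr1 (fun f : {ffun 'I_n -> bool} => f c) hb; rewrite !ffunE.
have hn : forall i, i < n.*2 -> nth false (ucode g1) i = nth false (ucode g2) i.
  move=> i hi; have := congr1 (fun f : {ffun 'I_(n.*2) -> bool} => f (Ordinal hi)) hu; by rewrite !ffunE.
have := pad_inj (size_ucode g1) (size_ucode g2) hn.
rewrite /ucode => h.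
have e : [seq hlev n (g1 c) | c <- enum 'I_n] = [seq hlev n (g2 c) | c <- enum 'I_n].
  exact: flat_inj' h.
by move/eq_in_map: e => /(_ c); apply; rewrite mem_enum.
Qed.

Definition rep (mk : 'I_n.+1 * codeT) : {perm 'I_n} :=
  ((odflt 1 [pick g | code mk.1 g == mk.2])^-1)%g.

Definition PiS : {set {perm 'I_n}} := [set rep mk | mk in [set: 'I_n.+1 * codeT]].

Lemma card_PiS : #|PiS| <= n.+1 * 2 ^ n * 2 ^ n.*2.
Proof.
apply: leq_trans (leq_imset_card _ _) _.
by rewrite cardsT card_prod card_prod !card_ffun !card_bool !card_ord mulnA.
Qed.

Lemma PiS_good (pi : {perm 'I_n}) (m : nat) : m <= n ->
  exists2 s, s \in PiS & forall i : 'I_n,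
     (i < m -> (pi^-1)%g (s i) < m) /\ i.+1 <= 2 * ((pi^-1)%g (s i)).+1.
Proof.
move=> hm.
pose mk : 'I_n.+1 * codeT := (Ordinal (hm : m < n.+1), code m (pi^-1)%g).
exists (rep mk); first by apply: imset_f; rewrite inE.
rewrite /rep /=; case: pickP => [g /eqP hg | /(_ (pi^-1)%g)]; last by rewrite eqxx.
move=> i; have := code_inj hg ((g^-1)%g i); rewrite permKV => -[e1 e2].
split; first by rewrite e1.
apply: hlev_eq => //; exact: ltn_ord.
Qed.
End Code.
Local Open Scope ring_scope.

Lemma sqr_abs (R : realDomainType) (x : R) : `|x| ^+ 2 = x ^+ 2.
Proof. by rewrite -normrX ger0_norm // sqr_ge0. Qed.

Lemma part1 (R : realType) (N T X Yv nu : R) : 0 < N -> 0 <= T -> 0 < nu ->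
  `|Num.sqrt N / T * X - Yv| <= 1 -> nu / Num.sqrt N < `|X| ->
  nu / T - 1 < `|Yv|.
Proof.
move=> N0 T0 nu0 h1 hX.
have hY : `|Num.sqrt N / T * X| - 1 <= `|Yv|.
  have := lerB_dist (Num.sqrt N / T * X) Yv.
  have := normr_ge0 Yv. lra.
case: (eqVneq T 0) => [-> | Tn0].
  by rewrite invr0 mulr0 sub0r (lt_le_trans _ (normr_ge0 Yv)) // ltrN10.
have Tp : 0 < T by rewrite lt_def Tn0.
have sN : 0 < Num.sqrt N by rewrite sqrtr_gt0.
apply: lt_le_trans hY; rewrite ltrD2r normrM ger0_norm; last first.
  by rewrite divr_ge0 // ?sqrtr_ge0 ?ltW.
rewrite mulrAC ltr_pM2r ?invr_gt0 //.
by rewrite mulrC -ltr_pdivrMr.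
Qed.

Lemma part2 (R : realType) (N T X Yv d P I rho : R) : 0 < N -> 0 <= T -> 0 < d -> 0 < P ->
  `|Num.sqrt N / T * X - Yv| <= 1 -> rho * X ^+ 2 <= 1 -> I <= 2 * rho ->
  d * N / P < I -> 
  `|Yv| <= Num.sqrt (2 * P) / (Num.sqrt d * T) + 1.
Proof.
move=> N0 T0 d0 P0 h1 hr hI hP.
have hY : `|Yv| <= `|Num.sqrt N / T * X| + 1.
  have := lerB_dist Yv (Num.sqrt N / T * X).
  rewrite distrC. lra.
case: (eqVneq T 0) => [e | Tn0].
  by move: hY; rewrite e !mulr0 !invr0 !mulr0 mul0r normr0 add0r.
have Tp : 0 < T by rewrite lt_def Tn0.
have sN : 0 < Num.sqrt N by rewrite sqrtr_gt0.
have sd : 0 < Num.sqrt d by rewrite sqrtr_gt0.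
apply: le_trans hY _; rewrite lerD2r normrM ger0_norm; last first.
  by rewrite divr_ge0 // ?sqrtr_ge0 ?ltW.
rewrite invfM mulrA [in X in X <= _]mulrAC ler_pM2r ?invr_gt0 //.
rewrite -(ler_pXn2r (isT : (0 < 2)%N)) ?nnegrE ?mulr_ge0 ?divr_ge0 ?invr_ge0 ?sqrtr_ge0 //.
have N0' : 0 <= N by apply: ltW.
have d0' : 0 <= d by apply: ltW.
have P0' : 0 <= 2 * P by rewrite mulr_ge0 // ltW.
rewrite exprMn expr_div_n sqr_abs !sqr_sqrtr //.
rewrite ler_pdivlMr //.
have h2 : d * N < I * P by rewrite -ltr_pdivrMr.
have h3 : d * N * X ^+ 2 <= I * P * X ^+ 2 := ler_wpM2r (sqr_ge0 X) (ltW h2).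
have h4 : I * P * X ^+ 2 <= 2 * rho * P * X ^+ 2.
  exact: (ler_wpM2r (sqr_ge0 X) (ler_wpM2r (ltW P0) hI)).
have h5 : rho * X ^+ 2 * (2 * P) <= 1 * (2 * P) := ler_wpM2r P0' hr.
have e1 : N * X ^+ 2 * d = d * N * X ^+ 2 by ring.
have e2 : 2 * rho * P * X ^+ 2 = rho * X ^+ 2 * (2 * P) by ring.
rewrite e1 mul1r in h5 *; rewrite e2 in h4.
exact: le_trans h3 (le_trans h4 h5).
Qed.

Lemma threshold_ge0 (R : realType) n p (x : 'I_n -> R) L : 0 <= threshold p x L.
Proof.
rewrite /threshold; set S := (X in sup X).
have [[t St]|hne] := pselect (exists t, S t).
  have ub : has_ubound S by exists 1 => y [/andP[_ ->]].
  have := ub_le_sup ub St; case: St => /andP[t0 _] _.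
  exact: le_trans (ltW t0).
have -> : S = set0 by apply/seteqP; split => y // Sy; apply: hne; exists y.
by rewrite sup0.
Qed.

Lemma sort_perm (R : realType) n (x : 'I_n -> R) :
  exists pi : {perm 'I_n}, forall i j : 'I_n, (i <= j)%N -> `|x (pi j)| <= `|x (pi i)|.
Proof.
case: n x => [|n] x.
  by exists 1%g => -[].
pose r := fun a b : 'I_n.+1 => `|x b| <= `|x a|.
have rtot : total r by move=> a b; rewrite /r le_total.
have rtr : transitive r by move=> a b c; rewrite /r => h1 h2; exact: le_trans h2 h1.
have rrefl : reflexive r by move=> a; rewrite /r.
pose s := sort r (enum 'I_n.+1).
have ss : size s = n.+1 by rewrite size_sort size_enum_ord.
have us : uniq s by rewrite sort_uniq enum_uniq.
have srt : sorted r s := sort_sorted rtot _.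
pose f := fun i : 'I_n.+1 => nth ord0 s i.
have finj : injective f.
  move=> i j /eqP; rewrite /f nth_uniq ?ss ?ltn_ord // => /eqP; exact: val_inj.
exists (perm finj) => i j hij; rewrite !permE /f.
apply: (sorted_leq_nth rtr rrefl ord0 srt) => //; by rewrite inE ss ltn_ord.
Qed.

Lemma sumR_lt (R : realType) n q (a : R) : (q <= n)%N ->
  \sum_(i < n) (if (i < q)%N then a else 0) = a * q%:R.
Proof.
move=> hq.
have -> : \sum_(i < n) (if (i < q)%N then a else 0) = \sum_(i < n) a * ((i < q)%N : nat)%:R.
  by apply: eq_bigr => i _; case: ifP; rewrite ?mulr1 ?mulr0.
by rewrite -mulr_sumr -natr_sum sum_lt.
Qed.

Lemma unit_sum (R : realType) n (x : 'I_n -> R) : unit_vec x -> \sum_i x i ^+ 2 = 1.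
Proof.
rewrite /unit_vec /norm2 => h.
have s0 : 0 <= \sum_i x i ^+ 2 by apply: sumr_ge0 => i _; exact: sqr_ge0.
by rewrite -(sqr_sqrtr s0) h expr1n.
Qed.

Lemma rank_bound (R : realType) n (x : 'I_n -> R) (pi : {perm 'I_n}) :
  \sum_i x i ^+ 2 = 1 ->
  (forall i j : 'I_n, (i <= j)%N -> `|x (pi j)| <= `|x (pi i)|) ->
  forall r : 'I_n, (r.+1)%:R * x (pi r) ^+ 2 <= 1.
Proof.
move=> hs hsort r; rewrite -[X in _ <= X]hs (reindex_inj (@perm_inj _ pi)) /=.
rewrite mulrC -(sumR_lt (x (pi r) ^+ 2) (ltn_ord r)).
apply: ler_sum => i _; case: ifP => h; last exact: sqr_ge0.
rewrite -[x (pi i) ^+ 2]sqr_abs -[x (pi r) ^+ 2]sqr_abs ler_pXn2r // ?nnegrE ?normr_ge0 //; apply: hsort.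
by rewrite -ltnS.
Qed.

Lemma card_lt_perm n (pi : {perm 'I_n}) r : (r <= n)%N ->
  #|[set c : 'I_n | ((pi^-1)%g c < r)%N]| = r.
Proof.
move=> hr.
have -> : #|[set c : 'I_n | ((pi^-1)%g c < r)%N]| =
          (\sum_(c < n) (((pi^-1)%g c < r)%N : nat))%N.
  rewrite -sum1_card big_mkcond /=; apply: eq_bigr => c _; rewrite inE.
  by case: ifP.
rewrite (reindex_inj (@perm_inj _ pi)) /=.
under eq_bigr do rewrite permK.
exact: sum_lt.
Qed.

Lemma incomp_large (R : realType) n (x : 'I_n -> R) (pi : {perm 'I_n}) delta nu m :
  0 < nu -> (0 < n)%N -> unit_vec x -> ~ Comp delta nu x ->
  (forall i j : 'I_n, (i <= j)%N -> `|x (pi j)| <= `|x (pi i)|) ->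
  m%:R <= delta * n%:R ->
  forall r : 'I_n, (r < m)%N -> nu / Num.sqrt n%:R < `|x (pi r)|.
Proof.
move=> nu0 n0 hu hnc hsort hm r hr.
rewrite ltNge; apply/negP => hle; apply: hnc; split => //.
exists (fun c => if ((pi^-1)%g c < r)%N then x c else 0); split.
  apply: le_trans hm; rewrite ler_nat; apply: leq_trans (ltnW hr).
  apply: (@leq_trans #|[set c : 'I_n | ((pi^-1)%g c < r)%N]|).
    apply: subset_leq_card; apply/fintype.subsetP => c; rewrite in_setE /= inE.
    by case: ifP => //; rewrite eqxx.
  by rewrite card_lt_perm // ltnW // ltn_ord.
rewrite /norm2 -(ger0_norm (ltW nu0)) -sqrtr_sqr ler_sqrt ?sqr_ge0 //.
have nR : n%:R != 0 :> R by rewrite pnatr_eq0 -lt0n.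
have nR0 : 0 < n%:R :> R by rewrite ltr0n.
apply: le_trans (_ : \sum_(c < n) (nu ^+ 2 / n%:R) <= _).
  apply: ler_sum => c _; case: ifP => h.
    by rewrite subrr expr0n /= divr_ge0 ?sqr_ge0 ?ler0n.
  rewrite subr0.
  have hc : `|x c| <= nu / Num.sqrt n%:R.
    apply: le_trans hle; rewrite -{1}(permKV pi c); apply: hsort.
    by rewrite leqNgt h.
  rewrite -sqr_abs -(sqr_sqrtr (ltW nR0)) -expr_div_n.
  by rewrite ler_pXn2r // ?nnegrE ?normr_ge0 ?divr_ge0 ?sqrtr_ge0 // ltW.
by rewrite sumr_const card_ord -[X in X <= _]mulr_natr divfK.
Qed.

Theorem lemma5p3 (R : realType) :
  exists C : R, 0 < C /\
  forall (n : nat), (2 <= n)%N ->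
  forall (C' c' : R), 0 < C' -> 0 < c' ->
  forall Y : R -> ('I_n -> R) -> R -> R -> ('I_n -> int),
  Y_props C' c' Y ->
  exists Pi : {set {perm 'I_n}},
    #|Pi|%:R <= C ^+ n /\
    forall (p delta s nu L : R) (x : 'I_n -> R),
      0 < p <= 1/2 -> 0 < delta <= 1/2 -> -1 <= s <= 0 -> 0 < nu <= 1 ->
      1 <= L -> Incomp delta nu x ->
      exists2 sigma, sigma \in Pi &
        let T := threshold p x L in
        let yt := fun i : 'I_n => ((Y p x L s (sigma i))%:~R : R) in
        (forall i : 'I_n, (i.+1)%:R <= delta * n%:R -> `|yt i| > nu / T - 1) /\
        (forall (j : nat) (i : 'I_n), 2 ^+ j <= delta * n%:R ->
           (i.+1)%:R > delta * n%:R / 2 ^+ j ->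
           `|yt i| <= Num.sqrt (2 ^+ j.+1) / (Num.sqrt delta * T) + 1).
Proof.
exists 16; split; first by rewrite ltr0n.
move=> n hn C' c' hC' hc' Y hY.
exists (PiS n); split.
  rewrite -natrX ler_nat; apply: leq_trans (card_PiS n) _.
  rewrite -(mul2n n) expnM.
  have -> : (16 = 2 * 2 * 2 ^ 2)%N by [].
  rewrite !expnMn; apply: leq_mul => //; apply: leq_mul => //.
  exact: ltn_expl.
move=> p delta s nu L x hp hd hs hnu hL [hu hnc].
have [pi hsort] := sort_perm x.
have hsum := unit_sum hu.
have n0 : (0 < n)%N by apply: leq_trans hn.
have d0 : 0 < delta by case/andP: hd.
have nu0 : 0 < nu by case/andP: hnu.
have dn0 : 0 <= delta * n%:R by rewrite mulr_ge0 // ltW.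
pose m := Num.truncn (delta * n%:R).
have hmR : m%:R <= delta * n%:R by rewrite truncn_le.
have hmn : (m <= n)%N.
  rewrite truncn_le_nat; apply: le_lt_trans (_ : _ <= n%:R) _; last by rewrite ltr_nat.
  rewrite ler_piMl ?ler0n //; case/andP: hd => _ h; apply: le_trans h _; lra.
have [sg sgin hsg] := PiS_good pi hmn.
exists sg => //.
have [h1 _ _ _] := hY p x L s hp hs hu hL.
have T0 := threshold_ge0 p x L.
split.
  move=> i hi; have [hlt _] := hsg i.
  have im : (i < m)%N by rewrite /m truncn_ge_nat.
  have := incomp_large nu0 n0 hu hnc hsort hmR (hlt im).
  rewrite permKV => hx.
  have nR0 : 0 < n%:R :> R by rewrite ltr0n.
  exact: (part1 nR0 T0 nu0 (h1 (sg i)) hx).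
move=> j i h2j hij; have [_ hle] := hsg i.
have hr := rank_bound hsum hsort ((pi^-1)%g (sg i)).
rewrite permKV in hr.
rewrite exprS.
have nR0 : 0 < n%:R :> R by rewrite ltr0n.
have P0 : 0 < 2 ^+ j :> R by rewrite exprn_gt0.
apply: (part2 nR0 T0 d0 P0 (h1 (sg i)) hr _ hij).
by rewrite -natrM ler_nat.
Qed.
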